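(* Let $D$ be a distance on $\mathcal D(\mathcal H)$ that is convex in each argument and contractive. Let $\rho$ be a state and let $\sigma^*$ be a separable state with $D(\rho,\sigma^* )=E_D(\rho)$. Then for every $p\in[0,1]$, $$E_D\big((1-p)\rho+p\sigma^*\big)=(1-p)E_D(\rho).$$
   Context: $\mathcal H$ is a finite-dimensional multipartite Hilbert space, $\mathcal D(\mathcal H)$ its density matrices, $\mathcal S\subseteq\mathcal D(\mathcal H)$ the separable states (convex combinations of product states). A distance $D$ is a metric on density matrices; convex in each argument means $D(p\rho_1+(1-p)\rho_2,\sigma)\le pD(\rho_1,\sigma)+(1-p)D(\rho_2,\sigma)$; contractive means $D(\Lambda[\rho],\Lambda[\sigma])\le D(\rho,\sigma)$ for every CPT map $\Lambda$. The distance-based entanglement measure is $E_D(\rho)=\inf_{\sigma\in\mathcal S}D(\rho,\sigma)$. *)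

(* Defs.v *)
From HB Require Import structures.
From mathcomp Require Import all_boot all_order all_algebra.
Set Implicit Arguments. Unset Strict Implicit. Unset Printing Implicit Defensive.
Import Order.TTheory GRing.Theory Num.Theory.
Local Open Scope ring_scope.

Section QDefs.
Variable C : numClosedFieldType.

Definition adjmx (m n : nat) (A : 'M[C]_(m, n)) : 'M[C]_(n, m) :=
  (map_mx Num.conj A)^T.

Definition psd (n : nat) (A : 'M[C]_n) : Prop :=
  adjmx A = A /\ forall v : 'cV[C]_n, 0 <= (adjmx v *m A *m v) 0 0.

Definition density (n : nat) (A : 'M[C]_n) : Prop := psd A /\ \tr A = 1.

(* Matrices on C^#|T| are viewed as indexed by the finite type T
   (the basis of C^#|T| is identified with T via enum_val). *)
Definition mxT (T : finType) (f : T -> T -> C) : 'M[C]_#|T| :=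
  \matrix_(a, b) f (enum_val a) (enum_val b).
Definition entT (T : finType) (A : 'M[C]_#|T|) (x y : T) : C :=
  A (enum_rank x) (enum_rank y).

(* Multipartite Hilbert space with m parties of local dimensions d k:
   H = (x)_k C^(d k), with basis indexed by the tuples (i_k)_k. *)
Definition mpidx (m : nat) (d : 'I_m -> nat) : finType :=
  {dffun forall k : 'I_m, 'I_(d k)}.
Definition mpdim (m : nat) (d : 'I_m -> nat) : nat := #|mpidx d|.

Definition tensor_prod (m : nat) (d : 'I_m -> nat)
    (rho : forall k : 'I_m, 'M[C]_(d k)) : 'M[C]_(mpdim d) :=
  mxT (fun (x y : mpidx d) => \prod_(k < m) rho k (x k) (y k)).

Definition product_state (m : nat) (d : 'I_m -> nat) (s : 'M[C]_(mpdim d)) : Prop :=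
  exists rho : forall k : 'I_m, 'M[C]_(d k),
    (forall k, density (rho k)) /\ s = tensor_prod rho.

Definition separable (m : nat) (d : 'I_m -> nat) (s : 'M[C]_(mpdim d)) : Prop :=
  exists (r : nat) (w : 'I_r -> C) (ps : 'I_r -> 'M[C]_(mpdim d)),
    (forall i, 0 <= w i) /\ \sum_(i < r) w i = 1 /\
    (forall i, product_state (ps i)) /\
    s = \sum_(i < r) w i *: ps i.

(* ampliation id_k (x) L of a map L on n x n matrices, acting on
   matrices over C^k (x) C^n (basis indexed by 'I_k * 'I_n) *)
Definition ampliate (k n : nat) (L : 'M[C]_n -> 'M[C]_n)
    (X : 'M[C]_#|{: 'I_k * 'I_n}|) : 'M[C]_#|{: 'I_k * 'I_n}| :=
  mxT (fun (x y : 'I_k * 'I_n) =>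
    L (\matrix_(i, j) entT X (x.1, i) (y.1, j)) x.2 y.2).

Definition linear_map (n : nat) (L : 'M[C]_n -> 'M[C]_n) : Prop :=
  forall (a : C) (X Y : 'M[C]_n), L (a *: X + Y) = a *: L X + L Y.
Definition completely_positive (n : nat) (L : 'M[C]_n -> 'M[C]_n) : Prop :=
  forall (k : nat) (X : 'M[C]_#|{: 'I_k * 'I_n}|), psd X -> psd (ampliate L X).
Definition trace_preserving (n : nat) (L : 'M[C]_n -> 'M[C]_n) : Prop :=
  forall X : 'M[C]_n, \tr (L X) = \tr X.
Definition CPT (n : nat) (L : 'M[C]_n -> 'M[C]_n) : Prop :=
  linear_map L /\ completely_positive L /\ trace_preserving L.

Definition distance (n : nat) (D : 'M[C]_n -> 'M[C]_n -> C) : Prop :=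
  (forall r s, density r -> density s -> 0 <= D r s) /\
  (forall r s, density r -> density s -> (D r s = 0 <-> r = s)) /\
  (forall r s, density r -> density s -> D r s = D s r) /\
  (forall r s t, density r -> density s -> density t ->
      D r t <= D r s + D s t).

Definition convex_each_arg (n : nat) (D : 'M[C]_n -> 'M[C]_n -> C) : Prop :=
  (forall (p : C) r1 r2 s, 0 <= p <= 1 -> density r1 -> density r2 -> density s ->
     D (p *: r1 + (1 - p) *: r2) s <= p * D r1 s + (1 - p) * D r2 s) /\
  (forall (p : C) r s1 s2, 0 <= p <= 1 -> density r -> density s1 -> density s2 ->
     D r (p *: s1 + (1 - p) *: s2) <= p * D r s1 + (1 - p) * D r s2).

Definition contractive (n : nat) (D : 'M[C]_n -> 'M[C]_n -> C) : Prop :=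
  forall (L : 'M[C]_n -> 'M[C]_n) r s, CPT L -> density r -> density s ->
    D (L r) (L s) <= D r s.

Definition is_inf (P : C -> Prop) (e : C) : Prop :=
  (forall x, P x -> e <= x) /\ (forall l, (forall x, P x -> l <= x) -> l <= e).

(* E_D(rho) = e, where E_D(rho) = inf_{sigma separable} D(rho, sigma) *)
Definition ED_eq (m : nat) (d : 'I_m -> nat)
    (D : 'M[C]_(mpdim d) -> 'M[C]_(mpdim d) -> C) (rho : 'M[C]_(mpdim d)) (e : C) : Prop :=
  is_inf (fun x => exists sigma, separable sigma /\ x = D rho sigma) e.

End QDefs.

(* Main.v *)
Require Import Defs.
From HB Require Import structures.
From mathcomp Require Import all_boot all_order all_algebra.
Set Implicit Arguments. Unset Strict Implicit. Unset Printing Implicit Defensive.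
Import Order.TTheory GRing.Theory Num.Theory.
Local Open Scope ring_scope.

Section S.
Variable C : numClosedFieldType.

Lemma adjmxE m n (A : 'M[C]_(m,n)) i j : adjmx A i j = (A j i)^*.
Proof. by rewrite !mxE. Qed.

Lemma adjmx_mul m n p (A : 'M[C]_(m,n)) (B : 'M[C]_(n,p)) :
  adjmx (A *m B) = adjmx B *m adjmx A.
Proof. by rewrite /adjmx map_mxM trmx_mul. Qed.

Lemma adjmx_tc n (P : 'M[C]_n) : adjmx (map_mx Num.conj P^T) = P.
Proof. by apply/matrixP => i j; rewrite !mxE conjCK. Qed.

Lemma psd_decomp n (A : 'M[C]_n) : psd A ->
  (forall l, 0 <= spectral_diag A 0 l) /\
  forall i j, A i j = \sum_l spectral_diag A 0 l *
                        ((spectralmx A l i)^* * spectralmx A l j).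
Proof.
move=> [Aher Apos].
set P := spectralmx A; set s := spectral_diag A.
have PU : P \is unitarymx by apply: spectral_unitarymx.
have Anorm : A \is normalmx.
  rewrite qualifE /=.
  by have -> : (A ^t*)%sesqui = A by rewrite -map_trmx; exact: Aher.
have /orthomx_spectralP AE := Anorm.
rewrite -/P -/s invmx_unitary // in AE.
have PPt : P *m (map_mx Num.conj P^T) = 1%:M by apply/unitarymxP.
split.
  move=> l.
  pose e : 'cV[C]_n := delta_mx l 0.
  have := Apos ((map_mx Num.conj P^T) *m e).
  rewrite adjmx_mul adjmx_tc AE !mulmxA.
  rewrite -[adjmx e *m P *m (map_mx Num.conj P^T)]mulmxA PPt mulmx1.
  rewrite -![adjmx e *m diag_mx s *m P *m _]mulmxA PPt mulmx1.
  have -> : adjmx e = delta_mx 0 l.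
    by apply/matrixP => i j; rewrite !mxE conjC_nat andbC.
  have -> : (delta_mx 0 l : 'rV[C]_n) *m diag_mx s = s 0 l *: delta_mx 0 l.
    apply/matrixP => i j; rewrite mul_mx_diag !mxE.
    by case: eqP => [_|]; case: eqP => [->|] /=; rewrite ?mulr1 ?mul1r ?mul0r ?mulr0.
  by rewrite -scalemxAl mul_delta_mx !mxE !eqxx mulr1.
move=> i j; rewrite AE mxE; apply: eq_bigr => l _.
rewrite mul_mx_diag !mxE.
by rewrite mulrA [_ * s 0 l]mulrC.
Qed.

Lemma gram_psd (L : finType) n (c : L -> C) (F : L -> 'I_n -> C) (M : 'M[C]_n) :
  (forall l, 0 <= c l) ->
  (forall a b, M a b = \sum_l c l * ((F l a)^* * F l b)) -> psd M.
Proof.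
move=> c0 HM; split.
  apply/matrixP => a b; rewrite adjmxE !HM rmorph_sum; apply: eq_bigr => l _.
  rewrite rmorphM rmorphM /= conjCK (geC0_conj (c0 l)).
  by rewrite [X in c l * X]mulrC.
move=> v.
have -> : (adjmx v *m M *m v) 0 0 =
   \sum_l c l * ((\sum_b F l b * v b 0)^* * (\sum_b F l b * v b 0)).
  rewrite mxE.
  under eq_bigr do rewrite mxE big_distrl /=.
  under eq_bigr do under eq_bigr do rewrite HM big_distrr big_distrl /=.
  under [RHS]eq_bigr do rewrite rmorph_sum big_distrl big_distrr /=.
  under [RHS]eq_bigr do under eq_bigr do rewrite big_distrr big_distrr /=.
  rewrite exchange_big /= [RHS]exchange_big /=.
  apply: eq_bigr => a _; rewrite exchange_big /=; apply: eq_bigr => l _.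
  apply: eq_bigr => b _.
  rewrite adjmxE rmorphM /=.
  set x := (v a 0)^*; set y := c l; set z := (F l a)^*.
  rewrite !mulrA; congr (_ * _ * _).
  by rewrite [x * y]mulrC -[y * x * z]mulrA [x * z]mulrC mulrA.
apply: sumr_ge0 => l _; apply: mulr_ge0 => //.
by rewrite mulrC mul_conjC_ge0.
Qed.

Lemma prod_sum_dep (m : nat) (d : 'I_m -> nat)
  (F : forall k : 'I_m, 'I_(d k) -> C) :
  \prod_(k < m) \sum_(i : 'I_(d k)) F k i = \sum_(x : mpidx d) \prod_(k < m) F k (x k).
Proof.
pose T_ := fun k : 'I_m => (ordinal (d k) : finType).
pose P_ := fun k : 'I_m => [ffun i : T_ k => F k i].
transitivity (\prod_(k < m) \sum_(j in tagged_with T_ k) untag 0 (P_ k) j).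
  apply: eq_bigr => k _.
  rewrite -(big_tag (op := GRing.add) (T_ := T_) (fun k => P_ k) k).
  by apply: eq_bigr => i _; rewrite ffunE.
rewrite bigA_distr_big_dep.
rewrite -(@big_fprod C 0 1 *%R +%R _ T_ P_).
rewrite (reindex (@fprod_of_dffun _ T_)); last first.
  by apply: onW_bij; exact: fprod_of_dffun_bij.
apply: eq_bigr => x _; apply: eq_bigr => k _.
by rewrite /P_ ffunE fprodE.
Qed.

Lemma tensor_density (m : nat) (d : 'I_m -> nat) (rho : forall k : 'I_m, 'M[C]_(d k)) :
  (forall k, density (rho k)) -> density (tensor_prod rho).
Proof.
move=> Hd; split.
  pose c := fun t : mpidx d => \prod_(k < m) spectral_diag (rho k) 0 (t k).
  pose F := fun (t : mpidx d) (a : 'I_(mpdim d)) =>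
     \prod_(k < m) spectralmx (rho k) (t k) (enum_val a k).
  apply: (@gram_psd _ _ c F).
    by move=> t; apply: prodr_ge0 => k _; case: (psd_decomp (proj1 (Hd k))).
  move=> a b; rewrite /tensor_prod /mxT mxE.
  under eq_bigr do rewrite (proj2 (psd_decomp (proj1 (Hd _)))).
  rewrite prod_sum_dep; apply: eq_bigr => t _.
  by rewrite /c /F rmorph_prod -!big_split.
rewrite /tensor_prod /mxT /mxtrace.
under eq_bigr do rewrite mxE.
transitivity (\sum_(x : mpidx d) \prod_(k < m) rho k (x k) (x k)).
  rewrite (reindex (fun a : 'I_(mpdim d) => enum_val a)) //.
  by apply: onW_bij; exact: enum_val_bij.
rewrite -(prod_sum_dep (fun k i => rho k i i)); apply: big1 => k _.
by case: (Hd k) => _ <-.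
Qed.

Lemma psd_add n (A B : 'M[C]_n) : psd A -> psd B -> psd (A + B).
Proof.
move=> [HA PA] [HB PB]; split.
  by apply/matrixP => i j; rewrite !mxE rmorphD /= -!adjmxE HA HB.
move=> v; rewrite mulmxDr mulmxDl mxE; exact: addr_ge0.
Qed.

Lemma psd_scale n (a : C) (A : 'M[C]_n) : 0 <= a -> psd A -> psd (a *: A).
Proof.
move=> a0 [HA PA]; split.
  by apply/matrixP => i j; rewrite !mxE rmorphM /= (geC0_conj a0) -adjmxE HA.
move=> v; rewrite -scalemxAr -scalemxAl mxE; exact: mulr_ge0.
Qed.

Lemma psd0 n : psd (0 : 'M[C]_n).
Proof.
split; first by apply/matrixP => i j; rewrite !mxE conjC0.
by move=> v; rewrite mulmx0 mul0mx mxE.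
Qed.

Lemma separable_density (m : nat) (d : 'I_m -> nat) (s : 'M[C]_(mpdim d)) :
  separable s -> density s.
Proof.
move=> [r [w [ps [w0 [w1 [Hps ->]]]]]].
have Dps : forall i, density (ps i).
  by move=> i; have [rho [Hr ->]] := Hps i; exact: tensor_density.
split.
  apply: (big_ind (fun M => psd M)); first exact: psd0.
    by move=> ? ?; exact: psd_add.
  by move=> i _; apply: psd_scale => //; case: (Dps i).
rewrite raddf_sum /=; rewrite -w1; apply: eq_bigr => i _.
by rewrite mxtraceZ; case: (Dps i) => _ ->; rewrite mulr1.
Qed.

Lemma mix_density n (p : C) (A B : 'M[C]_n) : 0 <= p <= 1 ->
  density A -> density B -> density ((1 - p) *: A + p *: B).
Proof.
move=> /andP[p0 p1] [PA TA] [PB TB]; split.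
  by apply: psd_add; apply: psd_scale => //; rewrite subr_ge0.
by rewrite mxtraceD !mxtraceZ TA TB !mulr1 subrK.
Qed.

End S.

Theorem mainTheorem8 (C : numClosedFieldType) (m : nat) (d : 'I_m -> nat)
    (D : 'M[C]_(mpdim d) -> 'M[C]_(mpdim d) -> C)
    (rho sigma_star : 'M[C]_(mpdim d)) (p : C) :
  distance D -> convex_each_arg D -> contractive D ->
  density rho -> separable sigma_star ->
  ED_eq D rho (D rho sigma_star) ->
  0 <= p <= 1 ->
  ED_eq D ((1 - p) *: rho + p *: sigma_star) ((1 - p) * D rho sigma_star).
Proof.
move=> [Dpos [Dzero [Dsym Dtri]]] [Cv1 Cv2] _ Drho Ssig [Hinf _] Hp.
have Dsig := separable_density Ssig.
set tau := (1 - p) *: rho + p *: sigma_star.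
have Dtau : density tau by apply: mix_density.
have p1 : 0 <= 1 - p <= 1.
  by case/andP: Hp => p0 p1; rewrite subr_ge0 p1 lerBlDl addrC lerDl p0.
have e1 : 1 - (1 - p) = p by rewrite opprB addrC subrK.
have Dself : forall r, density r -> D r r = 0 by move=> r Hr; apply/Dzero.
have Up : D tau sigma_star <= (1 - p) * D rho sigma_star.
  have := Cv1 (1 - p) rho sigma_star sigma_star p1 Drho Dsig Dsig.
  by rewrite e1 (Dself _ Dsig) mulr0 addr0.
split.
  move=> x [sigma [Ssg ->]].
  have Dsg := separable_density Ssg.
  have H1 : D rho sigma_star <= D rho sigma by apply: Hinf; exists sigma.
  have H2 := Dtri rho tau sigma Drho Dtau Dsg.
  have H3 : D rho tau <= p * D rho sigma_star.
    have := Cv2 (1 - p) rho rho sigma_star p1 Drho Drho Dsig.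
    by rewrite e1 (Dself _ Drho) mulr0 add0r.
  rewrite mulrBl mul1r lerBlDl.
  apply: (le_trans H1); apply: (le_trans H2); exact: lerD.
move=> l Hl; apply: (le_trans _ Up); apply: Hl.
by exists sigma_star.
Qed.
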